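(* Let $\bar A_t=\frac1{t+1}\sum_{k=0}^tr_k$ be the running average of the observed rewards, $\hat V_t=\bar A_t/(1-\gamma)$, and $\bar V=\pi^TV$ the mean of the true value function. Let $t_0$ be the largest integer satisfying $t_0\le2\tau^{\rm mix}\big(\frac1{2(t_0+1)}\big)$. Then for all $t>t_0$, $$E\big[(\hat V_t-\bar V)^2\big]\le O\!\left(\frac{r_{\max}^2\,\tau^{\rm mix}\big(\frac1{2(t+1)}\big)}{(1-\gamma)^2\,t}\right),$$ where the implied constant is absolute.
   Context: Setting: finite state space $\mathcal S=[n]$, finite action set, fixed policy $\mu$ inducing an irreducible aperiodic transition matrix $P$ with stationary distribution $\pi$; rewards deterministic with $|r(s,a,s')|\le r_{\max}$; discount $\gamma\in(0,1)$. The true value function $V\in\mathbb{R}^n$ is $V(s)=E_{\mu,s}[\sum_{t\ge0}\gamma^tr_{t+1}]$, equivalently $V=(I-\gamma P)^{-1}R$ with $R(s)=\sum_{s'}\sum_a\mu(s,a)P(s'|s,a)r(s,a,s')$. Mixing: there are $m>0$, $\rho\in(0,1)$ with $\sup_sd_{TV}(P^t(s,\cdot),\pi)\le m\rho^t$ for all $t\ge0$; $\tau^{\rm mix}(\epsilon)=\min\{t\in\mathbb N,t\ge1:m\rho^t\le\epsilon\}$. Observations: a single trajectory with $s_0\sim\pi$, $a_t\sim\mu(s_t,\cdot)$, $s_{t+1}$ from the MDP transition, $r_t=r(s_t,a_t,s_{t+1})$. *)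

(* Defs.v *)
From HB Require Import structures.
From mathcomp Require Import all_boot all_order all_algebra.
From mathcomp Require Import boolp reals.
Set Implicit Arguments. Unset Strict Implicit. Unset Printing Implicit Defensive.
Import Order.TTheory GRing.Theory Num.Theory.
Local Open Scope ring_scope.

Section MRP.
Variables (R : realType) (n : nat) (A : finType).

Definition trans_mx (mu : 'I_n -> A -> R) (Pm : 'I_n -> A -> 'I_n -> R) : 'M[R]_n :=
  \matrix_(s, s') \sum_(a : A) mu s a * Pm s a s'.

Definition rew_vec (mu : 'I_n -> A -> R) (Pm : 'I_n -> A -> 'I_n -> R)
  (r : 'I_n -> A -> 'I_n -> R) : 'cV[R]_n :=
  \col_s \sum_(s' < n) \sum_(a : A) mu s a * Pm s a s' * r s a s'.

Definition value_fun mu Pm r (gamma : R) : 'cV[R]_n :=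
  invmx (1%:M - gamma *: trans_mx mu Pm) *m rew_vec mu Pm r.

Definition mean_value (pi : 'I_n -> R) mu Pm r gamma : R :=
  \sum_(s < n) pi s * value_fun mu Pm r gamma s 0.

Definition is_distr (p : 'I_n -> R) := (forall s, 0 <= p s) /\ \sum_(s < n) p s = 1.

Definition stationary (P : 'M[R]_n) (pi : 'I_n -> R) :=
  is_distr pi /\ forall s', \sum_(s < n) pi s * P s s' = pi s'.

Definition irreducible (P : 'M[R]_n) :=
  forall s s' : 'I_n, exists t : nat, 0 < (P ^+ t) s s'.

(* every state has period 1: the gcd of its return times is 1 *)
Definition aperiodic (P : 'M[R]_n) :=
  forall (s : 'I_n) (d : nat),
    (forall t : nat, (0 < t)%N -> 0 < (P ^+ t) s s -> (d %| t)%N) -> d = 1%N.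

Definition dTV (p q : 'I_n -> R) : R := 2^-1 * \sum_(s < n) `|p s - q s|.

Definition geom_mixing (P : 'M[R]_n) (pi : 'I_n -> R) (m rho : R) :=
  forall (t : nat) (s : 'I_n), dTV (fun s' => (P ^+ t) s s') pi <= m * rho ^+ t.

End MRP.

(* tau^mix(eps) = min { t in N, t >= 1 : m rho^t <= eps } (0 if the set is empty) *)
Definition tau_mix (R : realType) (m rho eps : R) : nat :=
  match pselect (exists t : nat, `[< (1 <= t)%N /\ m * rho ^+ t <= eps >]) with
  | left h => ex_minn h
  | right _ => 0%N
  end.

Section Traj.
Variables (R : realType) (n : nat) (A : finType) (t : nat).

(* a trajectory up to time t: states s_0..s_{t+1}, actions a_0..a_t *)
Definition traj := ({ffun 'I_t.+2 -> 'I_n} * {ffun 'I_t.+1 -> A})%type.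

Definition st (w : traj) (k : nat) : 'I_n := w.1 (inord k).
Definition ac (w : traj) (k : nat) : A := w.2 (inord k).

Definition traj_prob (pi : 'I_n -> R) (mu : 'I_n -> A -> R)
  (Pm : 'I_n -> A -> 'I_n -> R) (w : traj) : R :=
  pi (st w 0) * \prod_(k < t.+1) (mu (st w k) (ac w k) * Pm (st w k) (ac w k) (st w k.+1)).

Definition obs_rew (r : 'I_n -> A -> 'I_n -> R) (w : traj) (k : nat) : R :=
  r (st w k) (ac w k) (st w k.+1).

Definition run_avg r (w : traj) : R := (t.+1%:R)^-1 * \sum_(k < t.+1) obs_rew r w k.

Definition Vhat r (gamma : R) (w : traj) : R := run_avg r w / (1 - gamma).

Definition mse pi mu Pm r gamma : R :=
  \sum_(w : traj) traj_prob pi mu Pm w * (Vhat r gamma w - mean_value pi mu Pm r gamma) ^+ 2.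

End Traj.

(* Main.v *)
Require Import Defs.
From HB Require Import structures.
From mathcomp Require Import all_boot all_order all_algebra.
From mathcomp Require Import boolp reals zify ring lra.
Import Order.TTheory GRing.Theory Num.Theory.
Local Open Scope ring_scope.
Set Implicit Arguments. Unset Strict Implicit. Unset Printing Implicit Defensive.

Definition fcons (T : finType) N (s : T) (y : {ffun 'I_N -> T}) : {ffun 'I_N.+1 -> T} :=
  [ffun i => if unlift ord0 i is Some j then y j else s].

Lemma fcons_0 (T : finType) N (s : T) (y : {ffun 'I_N -> T}) : fcons s y (inord 0) = s.
Proof.
have -> : (inord 0 : 'I_N.+1) = ord0 by apply: val_inj; rewrite /= inordK.
by rewrite ffunE unlift_none.
Qed.

Lemma fcons_S (T : finType) N (s : T) (y : {ffun 'I_N.+1 -> T}) k :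
  (k < N.+1)%N -> fcons s y (inord k.+1) = y (inord k).
Proof.
move=> hk.
have -> : (inord k.+1 : 'I_N.+2) = lift ord0 (inord k).
  by apply: val_inj; rewrite /= /bump /= inordK // inordK.
by rewrite ffunE liftK.
Qed.

Section Gen.
Variables (R : realType) (n : nat).

Lemma sum_ffunS (T : finType) N (F : {ffun 'I_N.+1 -> T} -> R) :
  \sum_x F x = \sum_(s : T) \sum_(y : {ffun 'I_N -> T}) F (fcons s y).
Proof.
rewrite pair_big /=.
rewrite (reindex (fun p : T * {ffun 'I_N -> T} => fcons p.1 p.2)) //=.
exists (fun x => (x ord0, [ffun j => x (lift ord0 j)])) => [[s y] _ | x _] /=.
- congr pair; first by rewrite ffunE unlift_none.
  by apply/ffunP => j; rewrite !ffunE liftK.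
- apply/ffunP => i; rewrite ffunE; case: unliftP => [j ->|->].
  + by rewrite ffunE.
  + by [].
Qed.

Lemma sum_ffun0 (T : finType) (F : {ffun 'I_0 -> T} -> R) (y0 : {ffun 'I_0 -> T}) :
  \sum_y F y = F y0.
Proof. rewrite (big_pred1 y0) // => y /=; by apply/esym/eqP/ffunP => -[]. Qed.

Definition app (M : 'M[R]_n) (v : 'I_n -> R) : 'I_n -> R :=
  fun s => \sum_(s' < n) M s s' * v s'.

Fixpoint chain (F : nat -> ('I_n -> R) -> ('I_n -> R)) (i N : nat) (v : 'I_n -> R) :=
  match N with 0 => v | N'.+1 => F i (chain F i.+1 N' v) end.

Lemma chain_split F N1 N2 i v :
  chain F i (N1 + N2) v = chain F i N1 (chain F (i + N1) N2 v).
Proof.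
elim: N1 i => [|N1 IH] i /=; first by rewrite addn0.
by rewrite IH addSnnS.
Qed.

Lemma chain_const F G i N v :
  (forall k, (i <= k < i + N)%N -> F k = G) -> chain F i N v = iter N G v.
Proof.
elim: N i => [//|N IH] i h /=.
rewrite IH ?h // ?leqnn ?addnS ?ltnS ?leq_addr //.
by move=> k /andP[hk1 hk2]; apply: h; rewrite (ltnW hk1) addnS /= -addSn.
Qed.

Lemma path_sum N (u v : 'I_n -> R) (M : nat -> 'M[R]_n) i :
  \sum_(x : {ffun 'I_N.+1 -> 'I_n}) u (x (inord 0)) *
     (\prod_(k < N) M (i + k)%N (x (inord k)) (x (inord k.+1))) * v (x (inord N))
  = \sum_s u s * chain (fun k => app (M k)) i N v s.
Proof.
elim: N u i => [|N IH] u i.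
  rewrite sum_ffunS; apply: eq_bigr => s _.
  rewrite (sum_ffun0 _ [ffun j => s]) big_ord0 mulr1 /=.
  by rewrite fcons_0.
rewrite sum_ffunS; apply: eq_bigr => s _.
transitivity (u s * \sum_(y : {ffun 'I_N.+1 -> 'I_n}) M i s (y (inord 0)) *
   (\prod_(k < N) M (i.+1 + k)%N (y (inord k)) (y (inord k.+1))) * v (y (inord N))).
  rewrite mulr_sumr; apply: eq_bigr => y _.
  rewrite fcons_0 big_ord_recl fcons_S // fcons_S // addn0 !mulrA; congr (_ * _ * _).
    by rewrite fcons_0.
  apply: eq_bigr => k _; rewrite lift0 !fcons_S ?addSnnS //.
  - by rewrite ltnS.
  - exact: ltn_trans (ltn_ord k) (ltnSn N).
by rewrite IH.
Qed.

End Gen.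


Section Traj2.
Variables (R : realType) (n : nat) (A : finType).
Variables (pi : 'I_n -> R) (mu : 'I_n -> A -> R) (Pm : 'I_n -> A -> 'I_n -> R).

Definition Mphi (phi : 'I_n -> A -> 'I_n -> R) : 'M[R]_n :=
  \matrix_(s, s') \sum_(a : A) mu s a * Pm s a s' * phi s a s'.

Lemma traj_sum t (phi : nat -> 'I_n -> A -> 'I_n -> R) :
  \sum_(w : traj n A t) traj_prob pi mu Pm w *
      \prod_(k < t.+1) phi k (st w k) (ac w k) (st w k.+1)
  = \sum_s pi s * chain (fun k => app (Mphi (phi k))) 0 t.+1 (fun _ => 1) s.
Proof.
rewrite -(path_sum t.+1 pi (fun _ => 1) (fun k => Mphi (phi k)) 0).
have := pair_bigA _ (fun (x : {ffun 'I_t.+2 -> 'I_n}) (y : {ffun 'I_t.+1 -> A}) =>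
   traj_prob pi mu Pm ((x, y) : traj n A t) *
      \prod_(k < t.+1) phi k (st ((x, y) : traj n A t) k) (ac ((x, y) : traj n A t) k)
          (st ((x, y) : traj n A t) k.+1)).
move=> /= H.
rewrite (eq_bigr (fun p : traj n A t => traj_prob pi mu Pm ((p.1, p.2) : traj n A t) *
      \prod_(k < t.+1) phi k (st ((p.1, p.2) : traj n A t) k) (ac ((p.1, p.2) : traj n A t) k)
          (st ((p.1, p.2) : traj n A t) k.+1))); last by case.
rewrite -H; apply: eq_bigr => x _.
rewrite /traj_prob /st /ac /= mulr1.
under eq_bigr do rewrite -mulrA -big_split /=.
rewrite -mulr_sumr; congr (_ * _).
set G := (fun (k : 'I_t.+1) (a : A) => 
   mu (x (inord k)) a * Pm (x (inord k)) a (x (inord k.+1)) * phi k (x (inord k)) a (x (inord k.+1))).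
rewrite (eq_bigr (fun y : {ffun 'I_t.+1 -> A} => \prod_(k < t.+1) G k (y k))); last first.
  by move=> y _; apply: eq_bigr => k _; rewrite /G inord_val.
rewrite -(bigA_distr_bigA G).
apply: eq_bigr => k _; rewrite mxE add0n; apply: eq_bigr => a _.
by [].
Qed.

End Traj2.


Lemma count_near (j tau N : nat) :
  (\sum_(k < N) ((k <= j + tau) && (j <= k + tau)) <= minn N (j + tau).+1 - (j - tau))%N.
Proof.
elim: N => [|N IH]; first by rewrite big_ord0.
rewrite big_ord_recr /=.
rewrite (eq_bigr (fun i : 'I_N => nat_of_bool ((i <= j + tau) && (j <= i + tau))%N)) //.
move: IH; set S := \sum_(i < N) _ => IH.
case: (boolP ((N <= j + tau) && (j <= N + tau))%N) => hb /=.
  case/andP: hb => h1 h2; lia.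
lia.
Qed.

Lemma count_near_R (R : realType) (j tau N : nat) :
  \sum_(k < N) (((k <= j + tau) && (j <= k + tau))%N%:R : R) <= (2 * tau + 1)%N%:R.
Proof.
rewrite -natr_sum ler_nat; apply: leq_trans (count_near j tau N) _; lia.
Qed.

Section Markov.
Variables (R : realType) (n : nat) (A : finType).
Variables (pi : 'I_n -> R) (mu : 'I_n -> A -> R) (Pm : 'I_n -> A -> 'I_n -> R).
Hypothesis hmu0 : forall s a, 0 <= mu s a.
Hypothesis hmu1 : forall s, \sum_(a : A) mu s a = 1.
Hypothesis hP0 : forall s a s', 0 <= Pm s a s'.
Hypothesis hP1 : forall s a, \sum_(s' < n) Pm s a s' = 1.
Hypothesis hstat : stationary (trans_mx mu Pm) pi.

Local Notation P := (trans_mx mu Pm).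

Lemma P_ge0 s s' : 0 <= P s s'.
Proof. by rewrite mxE; apply: sumr_ge0 => a _; apply: mulr_ge0. Qed.

Lemma P_row s : \sum_s' P s s' = 1.
Proof.
under eq_bigr do rewrite mxE.
rewrite exchange_big /= -(hmu1 s); apply: eq_bigr => a _.
by rewrite -mulr_sumr hP1 mulr1.
Qed.

Lemma app_P1 : app P (fun _ => 1) = (fun _ => 1).
Proof. by apply: funext => s; rewrite /app; under eq_bigr do rewrite mulr1; rewrite P_row. Qed.

Lemma iter_P1 l : iter l (app P) (fun _ => 1) = (fun _ => 1).
Proof. by elim: l => //= l ->; rewrite app_P1. Qed.

Lemma pi_app_P v : \sum_s pi s * app P v s = \sum_s pi s * v s.
Proof.
rewrite /app; under eq_bigr do rewrite mulr_sumr.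
rewrite exchange_big /=; apply: eq_bigr => s' _.
rewrite -(proj2 hstat s') mulr_suml; apply: eq_bigr => s _.
by rewrite mulrA.
Qed.

Lemma pi_iter_P l v : \sum_s pi s * iter l (app P) v s = \sum_s pi s * v s.
Proof. by elim: l => //= l IH; rewrite pi_app_P IH. Qed.

Lemma app_P_bound v B : (forall s, `|v s| <= B) -> forall s, `|app P v s| <= B.
Proof.
move=> hv s; rewrite /app.
apply: le_trans (ler_norm_sum _ _ _) _.
apply: (@le_trans _ _ (\sum_s' P s s' * B)); last by rewrite -mulr_suml P_row mul1r.
apply: ler_sum => s' _; rewrite normrM ger0_norm ?P_ge0 //.
by apply: ler_wpM2l; [apply: P_ge0 | apply: hv].
Qed.

Lemma iter_P_bound l v B : (forall s, `|v s| <= B) -> forall s, `|iter l (app P) v s| <= B.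
Proof. by elim: l => //= l IH hv; apply: app_P_bound; apply: IH. Qed.

Lemma app_mul (M N : 'M[R]_n) v : app (M *m N) v = app M (app N v).
Proof.
apply: funext => s; rewrite /app.
under eq_bigr do rewrite mxE mulr_suml.
rewrite exchange_big /=; apply: eq_bigr => k _.
by rewrite mulr_sumr; apply: eq_bigr => s' _; rewrite mulrA.
Qed.

Lemma app_1 v : app (1 : 'M[R]_n) v = v.
Proof.
apply: funext => s; rewrite /app (bigD1 s) //= mxE eqxx mul1r big1 ?addr0 //.
by move=> s' hs'; rewrite mxE eq_sym (negbTE hs') mul0r.
Qed.

Lemma iter_P_exp l v : iter l (app P) v = app (P ^+ l) v.
Proof.
elim: l => [|l IH] /=; first by rewrite expr0 app_1.
by rewrite IH exprS -mulmxE app_mul.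
Qed.

Lemma Pexp_ge0 l s s' : 0 <= (P ^+ l) s s'.
Proof.
elim: l s s' => [|l IH] s s'; first by rewrite expr0 mxE ler0n.
rewrite exprS -mulmxE mxE; apply: sumr_ge0 => k _.
by apply: mulr_ge0; [apply: P_ge0 | apply: IH].
Qed.

Lemma Pexp_row l s : \sum_s' (P ^+ l) s s' = 1.
Proof.
have := congr1 (fun f => f s) (iter_P1 l).
by rewrite iter_P_exp /app /=; under eq_bigr do rewrite mulr1.
Qed.

Lemma mix_bound l w B s : \sum_s pi s * w s = 0 -> (forall s, `|w s| <= B) ->
  `|app (P ^+ l) w s| <= 2 * B * dTV (fun s' => (P ^+ l) s s') pi.
Proof.
move=> h0 hw.
have -> : app (P ^+ l) w s = \sum_s' ((P ^+ l) s s' - pi s') * w s'.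
  by rewrite /app; under [RHS]eq_bigr do rewrite mulrBl; rewrite sumrB h0 subr0.
rewrite /dTV [2 * B]mulrC -mulrA [2 * _]mulrA mulfV ?mul1r; last by rewrite pnatr_eq0.
apply: le_trans (ler_norm_sum _ _ _) _.
rewrite mulr_sumr; apply: ler_sum => s' _.
by rewrite normrM mulrC; apply: ler_wpM2r.
Qed.

Definition Mphi_ := Mphi mu Pm.

Lemma Mphi_ext phi psi : (forall s a s', phi s a s' = psi s a s') -> Mphi_ phi = Mphi_ psi.
Proof.
move=> h; apply/matrixP => s s'; rewrite !mxE; apply: eq_bigr => a _; by rewrite h.
Qed.

Lemma Mphi1 : Mphi_ (fun _ _ _ => 1) = P.
Proof. apply/matrixP => s s'; rewrite !mxE; apply: eq_bigr => a _; by rewrite mulr1. Qed.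

Lemma Mphi_bound phi c : (forall s a s', `|phi s a s'| <= c) ->
  forall s, \sum_s' `|Mphi_ phi s s'| <= c.
Proof.
move=> h s.
apply: (@le_trans _ _ (\sum_s' \sum_a mu s a * Pm s a s' * c)).
  apply: ler_sum => s' _; rewrite mxE.
  apply: le_trans (ler_norm_sum _ _ _) _.
  apply: ler_sum => a _; rewrite normrM ger0_norm ?mulr_ge0 //.
  by apply: ler_wpM2l; [apply: mulr_ge0 | apply: h].
rewrite exchange_big /=.
have -> : \sum_a \sum_s' mu s a * Pm s a s' * c = \sum_a mu s a * c.
  by apply: eq_bigr => a _; rewrite -mulr_suml -mulr_sumr hP1 mulr1.
by rewrite -mulr_suml hmu1 mul1r.
Qed.

Lemma exp_bound (M : 'M[R]_n) v c B : 0 <= B ->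
  (forall s, \sum_s' `|M s s'| <= c) -> (forall s, `|v s| <= B) ->
  `|\sum_s pi s * app M v s| <= c * B.
Proof.
move=> hB hM hv.
have hpi : forall s, 0 <= pi s by case: (proj1 hstat).
apply: le_trans (ler_norm_sum _ _ _) _.
apply: (@le_trans _ _ (\sum_s pi s * (c * B))); last first.
  by rewrite -mulr_suml (proj2 (proj1 hstat)) mul1r.
apply: ler_sum => s _; rewrite normrM ger0_norm //; apply: ler_wpM2l => //.
rewrite /app; apply: le_trans (ler_norm_sum _ _ _) _.
apply: (@le_trans _ _ (\sum_s' `|M s s'| * B)); last by rewrite -mulr_suml ler_wpM2r.
by apply: ler_sum => s' _; rewrite normrM ler_wpM2l.
Qed.


Variables (r : 'I_n -> A -> 'I_n -> R) (rmax : R).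
Hypothesis hr : forall s a s', `|r s a s'| <= rmax.
Hypothesis hrmax : 0 <= rmax.

Definition a0 := \sum_s pi s * rew_vec mu Pm r s 0.
Definition gfun (j i : nat) : 'I_n -> A -> 'I_n -> R :=
  fun s a s' => if i == j then r s a s' - a0 else 1.
Definition phiJK (j k i : nat) : 'I_n -> A -> 'I_n -> R :=
  fun s a s' => gfun j i s a s' * gfun k i s a s'.
Definition Dm := Mphi_ (fun s a s' => r s a s' - a0).
Definition D2 := Mphi_ (fun s a s' => (r s a s' - a0) * (r s a s' - a0)).
Definition w0 := app Dm (fun _ => 1).
Definition FF j k := fun i => app (Mphi_ (phiJK j k i)).

Lemma app_bound (M : 'M[R]_n) v c B s : 0 <= B ->
  \sum_s' `|M s s'| <= c -> (forall s, `|v s| <= B) -> `|app M v s| <= c * B.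
Proof.
move=> hB hM hv.
rewrite /app; apply: le_trans (ler_norm_sum _ _ _) _.
apply: (@le_trans _ _ (\sum_s' `|M s s'| * B)); last by rewrite -mulr_suml ler_wpM2r.
by apply: ler_sum => s' _; rewrite normrM ler_wpM2l.
Qed.

Lemma a0E : a0 = \sum_s pi s * app (Mphi_ r) (fun _ => 1) s.
Proof.
apply: eq_bigr => s _; congr (_ * _); rewrite /app mxE; apply: eq_bigr => s' _.
by rewrite mxE mulr1.
Qed.

Lemma a0_bound : `|a0| <= rmax.
Proof.
rewrite a0E -[rmax]mulr1; apply: exp_bound => //.
  by apply: Mphi_bound.
by move=> _; rewrite normr1.
Qed.

Lemma rma_bound s a s' : `|r s a s' - a0| <= 2 * rmax.
Proof.
apply: le_trans (ler_normB _ _) _.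
by rewrite mulr_natl mulr2n lerD // a0_bound.
Qed.

Lemma w0E s : w0 s = app (Mphi_ r) (fun _ => 1) s - a0.
Proof.
rewrite /w0 /Dm /app.
transitivity (\sum_s' (Mphi_ r s s' - P s s' * a0)).
  apply: eq_bigr => s' _; rewrite !mxE mulr1 mulr_suml -sumrB.
  by apply: eq_bigr => a _; rewrite mulrBr.
rewrite sumrB -mulr_suml P_row mul1r.
by under [in RHS]eq_bigr do rewrite mulr1.
Qed.

Lemma w0_sum : \sum_s pi s * w0 s = 0.
Proof.
under eq_bigr do rewrite w0E mulrBr.
by rewrite sumrB -a0E -mulr_suml (proj2 (proj1 hstat)) mul1r subrr.
Qed.

Lemma w0_bound s : `|w0 s| <= 2 * rmax.
Proof.
rewrite -[2 * rmax]mulr1; apply: app_bound => //.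
  by apply: Mphi_bound => s0 a s'; apply: rma_bound.
by move=> _; rewrite normr1.
Qed.


Lemma FF_other j k i : i != j -> i != k -> FF j k i = app P.
Proof.
move=> hj hk; rewrite /FF (@Mphi_ext (phiJK j k i) (fun _ _ _ => 1)) ?Mphi1 // => s a s'.
by rewrite /phiJK /gfun (negbTE hj) (negbTE hk) mulr1.
Qed.

Lemma FF_j j k : j != k -> FF j k j = app Dm.
Proof.
move=> h; rewrite /FF /Dm (@Mphi_ext (phiJK j k j) (fun s a s' => r s a s' - a0)) // => s a s'.
by rewrite /phiJK /gfun eqxx (negbTE h) mulr1.
Qed.

Lemma FF_k j k : j != k -> FF j k k = app Dm.
Proof.
move=> h; rewrite /FF /Dm (@Mphi_ext (phiJK j k k) (fun s a s' => r s a s' - a0)) // => s a s'.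
by rewrite /phiJK /gfun eqxx eq_sym (negbTE h) mul1r.
Qed.

Lemma FF_jj j : FF j j j = app D2.
Proof.
rewrite /FF /D2 (@Mphi_ext (phiJK j j j) (fun s a s' => (r s a s' - a0) * (r s a s' - a0))) //.
by move=> s a s'; rewrite /phiJK /gfun eqxx.
Qed.

Lemma E_diag j t : (j <= t)%N ->
  \sum_s pi s * chain (FF j j) 0 t.+1 (fun _ => 1) s = \sum_s pi s * app D2 (fun _ => 1) s.
Proof.
move=> hjt.
have h1 : chain (FF j j) j.+1 (t - j) (fun _ => 1) = (fun _ => 1).
  rewrite (chain_const (G := app P)) ?iter_P1 // => i /andP[hi _].
  by apply: FF_other; rewrite neq_ltn hi orbT.
have h2 : forall x, chain (FF j j) 0 j x = iter j (app P) x.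
  move=> x; apply: chain_const => i /andP[_ hi].
  by apply: FF_other; rewrite neq_ltn -(add0n j) hi.
have -> : t.+1 = (j + (t - j).+1)%N by lia.
rewrite chain_split add0n h2 pi_iter_P /=.
by rewrite h1 FF_jj.
Qed.

Lemma E_lt j k t : (j < k)%N -> (k <= t)%N ->
  \sum_s pi s * chain (FF j k) 0 t.+1 (fun _ => 1) s =
  \sum_s pi s * app Dm (iter (k - j.+1) (app P) w0) s.
Proof.
move=> hjk hkt.
have hne : j != k by rewrite neq_ltn hjk.
have h1 : chain (FF j k) k.+1 (t - k) (fun _ => 1) = (fun _ => 1).
  rewrite (chain_const (G := app P)) ?iter_P1 // => i /andP[hi _].
  by apply: FF_other; rewrite neq_ltn ?(ltn_trans hjk hi) ?hi ?orbT.
have h2 : forall x, chain (FF j k) 0 j x = iter j (app P) x.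
  move=> x; apply: chain_const => i /andP[_ hi]; rewrite add0n in hi.
  by apply: FF_other; rewrite neq_ltn ?hi ?(ltn_trans hi hjk).
have h3 : forall x, chain (FF j k) j.+1 (k - j.+1) x = iter (k - j.+1) (app P) x.
  move=> x; apply: chain_const => i /andP[hi1 hi2].
  have hik : (i < k)%N by lia.
  by apply: FF_other; rewrite neq_ltn ?hik ?hi1 ?orbT.
have -> : t.+1 = (j + ((k - j.+1) + (t - k).+1).+1)%N by lia.
rewrite chain_split add0n h2 pi_iter_P /= chain_split h3.
have -> : (j.+1 + (k - j.+1))%N = k by lia.
by rewrite /= h1 FF_k // FF_j.
Qed.


Variables (m rho eps : R) (tau : nat).
Hypothesis hm : 0 < m.
Hypothesis hrho0 : 0 <= rho.
Hypothesis hrho1 : rho <= 1.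
Hypothesis hmix : geom_mixing P pi m rho.
Hypothesis htau : m * rho ^+ tau <= eps.
Hypothesis heps : 0 <= eps.

Definition EE j k t := \sum_s pi s * chain (FF j k) 0 t.+1 (fun _ => 1) s.
Definition bb (j k : nat) : R := ((k <= j + tau) && (j <= k + tau))%N%:R.

Lemma rho_mono l : (tau <= l)%N -> m * rho ^+ l <= eps.
Proof.
move=> hl; apply: le_trans htau; rewrite ler_wpM2l ?(ltW hm) //.
rewrite -(subnKC hl) exprD ler_piMr ?exprn_ge0 // exprn_ile1 //.
Qed.

Lemma Dm_bound s : \sum_s' `|Dm s s'| <= 2 * rmax.
Proof. by apply: Mphi_bound => s0 a s'; apply: rma_bound. Qed.

Lemma bound_diag j t : (j <= t)%N -> `|EE j j t| <= 4 * rmax ^+ 2.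
Proof.
move=> h; rewrite /EE E_diag //.
have -> : 4 * rmax ^+ 2 = (2 * rmax * (2 * rmax)) * 1 by ring.
apply: exp_bound => //.
  apply: Mphi_bound => s a s'; rewrite normrM.
  by apply: ler_pM; rewrite ?normr_ge0 ?rma_bound.
by move=> _; rewrite normr1.
Qed.

Lemma bound_lt j k t : (j < k)%N -> (k <= t)%N -> `|EE j k t| <= 8 * rmax ^+ 2 * (bb j k + eps).
Proof.
move=> hjk hkt; rewrite /EE E_lt //.
have hb0 : 0 <= bb j k by rewrite /bb ler0n.
have h2 : 0 <= rmax ^+ 2 * eps by rewrite mulr_ge0 ?exprn_ge0.
have h3 : 0 <= rmax ^+ 2 * bb j k by rewrite mulr_ge0 ?exprn_ge0.
case: (ltnP (k - j.+1) tau) => hl.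
  have -> : bb j k = 1 by rewrite /bb; have -> : ((k <= j + tau) && (j <= k + tau))%N by apply/andP; split; lia.
  apply: (@le_trans _ _ (2 * rmax * (2 * rmax))); last by nra.
  apply: exp_bound; rewrite ?mulr_ge0 //; first by apply: Dm_bound.
  by apply: iter_P_bound; apply: w0_bound.
apply: (@le_trans _ _ (2 * rmax * (4 * rmax * eps))); last by nra.
apply: exp_bound; rewrite ?mulr_ge0 //; first by apply: Dm_bound.
move=> s; rewrite iter_P_exp.
apply: le_trans (mix_bound (k - j.+1) s w0_sum w0_bound) _.
have -> : 4 * rmax * eps = 2 * (2 * rmax) * eps by ring.
rewrite ler_wpM2l ?mulr_ge0 //.
by apply: le_trans (hmix _ _) (rho_mono hl).
Qed.

Lemma FF_sym j k : FF j k = FF k j.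
Proof.
apply: funext => i; rewrite /FF (@Mphi_ext (phiJK j k i) (phiJK k j i)) // => s a s'.
by rewrite /phiJK mulrC.
Qed.

Lemma bound_all j k t : (j <= t)%N -> (k <= t)%N ->
  `|EE j k t| <= 8 * rmax ^+ 2 * (bb j k + eps).
Proof.
move=> hj hk; case: (ltngtP j k) => h.
- exact: bound_lt.
- rewrite /EE FF_sym -/(EE k j t) /bb andbC; exact: bound_lt.
- rewrite -h; apply: le_trans (bound_diag hj) _.
  have -> : bb j j = 1 by rewrite /bb !leq_addr.
  have h2 : 0 <= rmax ^+ 2 * eps by rewrite mulr_ge0 ?exprn_ge0.
  by nra.
Qed.


Lemma rowP_stat : (\row_s pi s) *m P = \row_s pi s.
Proof.
apply/matrixP => i s'; rewrite !mxE; rewrite -(proj2 hstat s').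
by apply: eq_bigr => s _; rewrite mxE.
Qed.

Lemma meanE gamma : 0 < gamma < 1 -> mean_value pi mu Pm r gamma = a0 / (1 - gamma).
Proof.
case/andP=> hg0 hg1.
set M := 1%:M - gamma *: P.
have hg : 1 - gamma != 0 by rewrite subr_eq0 eq_sym (lt_eqF hg1).
have hu : M \in unitmx.
  rewrite -row_free_unit; apply: inj_row_free => v hv.
  have hv2 : v = gamma *: (v *m P).
    apply/eqP; rewrite -subr_eq0; apply/eqP; rewrite -hv /M mulmxBr mulmx1 -scalemxAr.
    by [].
  have hS : \sum_s' `|v 0 s'| <= gamma * \sum_s' `|v 0 s'|.
    rewrite {1}hv2.
    apply: (@le_trans _ _ (\sum_s' gamma * \sum_s `|v 0 s| * P s s')).
      apply: ler_sum => s' _; rewrite !mxE normrM ger0_norm ?(ltW hg0) //.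
      rewrite ler_wpM2l ?(ltW hg0) //; apply: le_trans (ler_norm_sum _ _ _) _.
      by apply: ler_sum => s _; rewrite normrM (ger0_norm (P_ge0 _ _)).
    rewrite -mulr_sumr ler_wpM2l ?(ltW hg0) // exchange_big /=.
    by apply: ler_sum => s _; rewrite -mulr_sumr P_row mulr1.
  have hS0 : \sum_s' `|v 0 s'| = 0.
    apply/eqP; rewrite eq_le sumr_ge0 ?andbT //.
    have : (1 - gamma) * \sum_s' `|v 0 s'| <= 0 by rewrite mulrBl mul1r subr_le0.
    by rewrite pmulr_rle0 // subr_gt0.
  apply/matrixP => i s'; rewrite ord1 mxE.
  by apply/normr0_eq0; apply: (psumr_eq0P _ hS0).
have hpi : (\row_s pi s) *m M = (1 - gamma) *: \row_s pi s.
  by rewrite /M mulmxBr mulmx1 -scalemxAr rowP_stat scalerBl scale1r.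
have hpi2 : (\row_s pi s) *m invmx M = (1 - gamma)^-1 *: \row_s pi s.
  rewrite -{1}[\row_s pi s](scalerK hg) -hpi -scalemxAl.
  by rewrite (mulmxK hu).
rewrite /mean_value /value_fun -/M.
have -> : \sum_s pi s * (invmx M *m rew_vec mu Pm r) s 0
   = ((\row_s pi s) *m invmx M *m rew_vec mu Pm r) 0 0.
  rewrite -mulmxA [RHS]mxE; apply: eq_bigr => s _; by rewrite [(\row_s pi s) _ _]mxE.
rewrite hpi2 -scalemxAl mxE mulrC; congr (_ * _).
by rewrite mxE; apply: eq_bigr => s _; rewrite mxE.
Qed.


Lemma prod_phi t (w : traj n A t) (j k : 'I_t.+1) :
  \prod_(i < t.+1) phiJK j k i (st w i) (ac w i) (st w i.+1) =
  (obs_rew r w j - a0) * (obs_rew r w k - a0).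
Proof.
rewrite /phiJK big_split /=; congr (_ * _).
  rewrite (bigD1 j) //= /gfun eqxx big1 ?mulr1 // => i hij.
  by rewrite ifN.
rewrite (bigD1 k) //= /gfun eqxx big1 ?mulr1 // => i hij.
by rewrite ifN.
Qed.

Lemma mseE t gamma : 0 < gamma < 1 ->
  mse t pi mu Pm r gamma =
  ((t.+1%:R * (1 - gamma))^-1) ^+ 2 * \sum_(j < t.+1) \sum_(k < t.+1) EE j k t.
Proof.
move=> hg; case/andP: (hg) => hg0 hg1.
have hg' : 1 - gamma != 0 by rewrite subr_eq0 eq_sym (lt_eqF hg1).
have ht : t.+1%:R != 0 :> R by rewrite pnatr_eq0.
rewrite /mse meanE //.
set c := (t.+1%:R * (1 - gamma))^-1.
have key : forall w : traj n A t, Vhat r gamma w - a0 / (1 - gamma) =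
    c * \sum_(k < t.+1) (obs_rew r w k - a0).
  move=> w; rewrite /Vhat /run_avg sumrB sumr_const card_ord -mulr_natl /c.
  by field; rewrite hg' addrC natr1 pnatr_eq0.
under eq_bigr do rewrite key.
transitivity (\sum_(w : traj n A t) c ^+ 2 * \sum_(j < t.+1) \sum_(k < t.+1)
    traj_prob pi mu Pm w * ((obs_rew r w j - a0) * (obs_rew r w k - a0))).
  apply: eq_bigr => w _; rewrite exprMn mulrCA; congr (_ * _).
  rewrite expr2 mulr_suml mulr_sumr; apply: eq_bigr => j _.
  by rewrite mulr_sumr mulr_sumr.
rewrite -mulr_sumr; congr (_ * _).
rewrite exchange_big /=; apply: eq_bigr => j _.
rewrite exchange_big /=; apply: eq_bigr => k _.
rewrite /EE -traj_sum; apply: eq_bigr => w _.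
by rewrite prod_phi.
Qed.



Lemma sumEE_bound t : \sum_(j < t.+1) \sum_(k < t.+1) EE j k t <=
   8 * rmax ^+ 2 * (t.+1%:R * ((2 * tau + 1)%N%:R + t.+1%:R * eps)).
Proof.
have hr2 : 0 <= 8 * rmax ^+ 2 by rewrite mulr_ge0 ?exprn_ge0.
apply: (@le_trans _ _ (\sum_(j < t.+1) \sum_(k < t.+1) 8 * rmax ^+ 2 * (bb j k + eps))).
  apply: ler_sum => j _; apply: ler_sum => k _.
  apply: le_trans (ler_norm _) _.
  by apply: bound_all; rewrite -ltnS.
apply: (@le_trans _ _ (\sum_(j < t.+1) 8 * rmax ^+ 2 * ((2 * tau + 1)%N%:R + t.+1%:R * eps))).
  apply: ler_sum => j _; rewrite -mulr_sumr ler_wpM2l // big_split /= lerD //.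
    exact: count_near_R.
  by rewrite sumr_const card_ord mulr_natl.
by rewrite sumr_const card_ord -[_ *+ t.+1]mulr_natl mulrCA.
Qed.

End Markov.


Lemma bernoulli (R : realType) (d : R) (T : nat) : 0 <= d -> 1 + T%:R * d <= (1 + d) ^+ T.
Proof.
move=> hd; elim: T => [|T IH]; first by rewrite mul0r addr0 expr0.
rewrite exprS -natr1.
have h0 : 0 <= T%:R * d by rewrite mulr_ge0.
have h1 : 0 <= (1 + d) ^+ T by rewrite exprn_ge0 // addr_ge0.
nra.
Qed.

Lemma tau_exists (R : realType) (m rho eps : R) : 0 < m -> 0 < rho < 1 -> 0 < eps ->
  exists t : nat, `[< (1 <= t)%N /\ m * rho ^+ t <= eps >].
Proof.
move=> hm /andP[hr0 hr1] he.
set x := rho^-1.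
have hx : 1 < x by rewrite /x invf_gt1.
set d := x - 1.
have hd : 0 < d by rewrite /d subr_gt0.
have hq : 0 <= m / (eps * d) by rewrite divr_ge0 ?(ltW hm) // mulr_ge0 // ltW.
set T := (Num.Def.archi_bound (m / (eps * d))).+1.
exists T; apply/asboolP; split; first by [].
have hT : m / (eps * d) < T%:R.
  apply: lt_le_trans (archi_boundP hq) _; by rewrite ler_nat.
have hB := bernoulli T (ltW hd).
have hxT : 0 < x ^+ T by rewrite exprn_gt0 // (lt_trans ltr01 hx).
have -> : rho ^+ T = (x ^+ T)^-1 by rewrite /x exprVn invrK.
rewrite ler_pdivrMr //.
have : m < eps * d * T%:R by rewrite mulrC -ltr_pdivrMr // mulr_gt0.
have : 1 + d = x by rewrite /d addrC subrK.
move=> hxd; rewrite hxd in hB.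
have h3 : 0 <= eps * d * T%:R by rewrite !mulr_ge0 // ltW.
move=> hlt.
apply: (le_trans (ltW hlt)).
have : eps * d * T%:R <= eps * (1 + T%:R * d) by nra.
move=> h4; apply: le_trans h4 _.
by rewrite ler_wpM2l // ltW.
Qed.

Theorem lemma3 :
  exists C : nat, forall (R : realType) (n : nat) (A : finType)
    (mu : 'I_n -> A -> R) (Pm : 'I_n -> A -> 'I_n -> R)
    (r : 'I_n -> A -> 'I_n -> R) (rmax gamma : R) (pi : 'I_n -> R) (m rho : R)
    (t0 : nat),
    (forall s a, 0 <= mu s a) -> (forall s, \sum_(a : A) mu s a = 1) ->
    (forall s a s', 0 <= Pm s a s') -> (forall s a, \sum_(s' < n) Pm s a s' = 1) ->
    irreducible (trans_mx mu Pm) -> aperiodic (trans_mx mu Pm) ->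
    stationary (trans_mx mu Pm) pi ->
    (forall s a s', `|r s a s'| <= rmax) ->
    0 < gamma < 1 ->
    0 < m -> 0 < rho < 1 -> geom_mixing (trans_mx mu Pm) pi m rho ->
    (* t0 = the largest integer with t0 <= 2 tau^mix(1/(2(t0+1))) *)
    (t0 <= 2 * tau_mix m rho (2 * t0.+1%:R)^-1)%N ->
    (forall t', (t' <= 2 * tau_mix m rho (2 * t'.+1%:R)^-1)%N -> (t' <= t0)%N) ->
    forall t : nat, (t0 < t)%N ->
      mse t pi mu Pm r gamma <=
        C%:R * (rmax ^+ 2 * (tau_mix m rho (2 * t.+1%:R)^-1)%:R)
          / ((1 - gamma) ^+ 2 * t%:R).
Proof.
exists 32%N => R n A mu Pm r rmax gamma pi m rho t0 hmu0 hmu1 hP0 hP1 _ _ hstat hr hg hm hrho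
  hmix _ _ t ht.
have hrmax : 0 <= rmax.
  case: n mu Pm r pi hmu0 hmu1 hP0 hP1 hstat hr hmix => [|n'] mu Pm r pi hmu0 hmu1 hP0 hP1 hstat hr hmix.
    by have := proj2 (proj1 hstat); rewrite big_ord0 => /eqP; rewrite eq_sym oner_eq0.
  case: (pickP (@predT A)) => [a _|hA].
    exact: le_trans (normr_ge0 _) (hr ord0 a ord0).
  by have := hmu1 ord0; rewrite big_pred0 // => /eqP; rewrite eq_sym oner_eq0.
case/andP: (hrho) => hrho0 hrho1.
set eps : R := (2 * t.+1%:R)^-1.
have heps : 0 < eps by rewrite invr_gt0 mulr_gt0 // ltr0n.
have [htau1 htau] : (1 <= tau_mix m rho eps)%N /\ m * rho ^+ (tau_mix m rho eps) <= eps.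
  rewrite /tau_mix; case: pselect => [h|hn].
    by case: ex_minnP => T /asboolP.
  by exfalso; apply: hn; apply: tau_exists.
set tau := tau_mix m rho eps in htau1 htau *.
rewrite (mseE hmu0 hmu1 hP0 hP1 hstat r t hg).
have HS := sumEE_bound hmu0 hmu1 hP0 hP1 hstat hr hrmax hm (ltW hrho0) (ltW hrho1) hmix htau (ltW heps) t.
have hg' : 0 < 1 - gamma by case/andP: hg => _ h; rewrite subr_gt0.
have ht0 : (0 < t)%N by apply: leq_ltn_trans (leq0n t0) ht.
have htR : 0 < t%:R :> R by rewrite ltr0n.
have hT1 : 0 < t.+1%:R :> R by rewrite ltr0n.
have htau1R : 1 <= tau%:R :> R by rewrite ler1n.
set g := 1 - gamma in hg' *.
set c := (t.+1%:R * g)^-1.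
apply: le_trans (ler_wpM2l (exprn_ge0 2 (ltW _)) HS) _; first by rewrite invr_gt0 mulr_gt0.
set K := (2 * tau + 1)%N%:R.
have -> : c ^+ 2 * (8 * rmax ^+ 2 * (t.+1%:R * (K + t.+1%:R * eps))) =
    8 * rmax ^+ 2 * (K + 2^-1) / (t.+1%:R * g ^+ 2).
  rewrite /c /eps; field.
  by rewrite (gt_eqF hg') addrC natr1 (gt_eqF hT1).
rewrite ler_pdivrMr; last by rewrite mulr_gt0 // exprn_gt0.
have -> : 32%:R * (rmax ^+ 2 * tau%:R) / (g ^+ 2 * t%:R) * (t.+1%:R * g ^+ 2) =
   32 * rmax ^+ 2 * tau%:R * t.+1%:R / t%:R.
  by field; rewrite (gt_eqF hg') (gt_eqF htR).
rewrite ler_pdivlMr //.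
have -> : K = 2 * tau%:R + 1 by rewrite /K natrD natrM.
rewrite -natr1.
set p := rmax ^+ 2.
have hp : 0 <= p by rewrite exprn_ge0.
have h1 : 0 <= p * (tau%:R * t%:R - t%:R).
  by rewrite mulr_ge0 // subr_ge0 ler_peMl // ltW.
have h2 : 0 <= p * tau%:R by rewrite mulr_ge0 // (le_trans ler01).
have h3 : 0 <= p * t%:R by rewrite mulr_ge0 // ltW.
nra.
Qed.
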